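(* Consider the discrete-time LPV system $x_{k+1}=A(p_k)x_k+B(p_k)u_k$ with affine $A(p)=A_0+\sum_{i=1}^{n_p}p_iA_i$, $B(p)=B_0+\sum_{i=1}^{n_p}p_iB_i$, and a data set $\mathcal{D}$ from it such that $\mathcal{D}_p$ has full row rank $(1+n_p)(n_x+n_u)$. Suppose there exist $P\in\mathbb{S}^{n_x}$ with $P\succ0$, matrices $\mathcal{F}\in\mathbb{R}^{(N_d-1)\times n_x(1+n_p+n_p^2)}$ and $F_Q\in\mathbb{R}^{(N_d-1)(1+n_p)\times n_x(1+n_p)}$ related by $$\mathcal{F}\begin{bmatrix}I_{n_x}\\ p\otimes I_{n_x}\\ p\otimes p\otimes I_{n_x}\end{bmatrix}=\begin{bmatrix}I_{N_d-1}\\ p\otimes I_{N_d-1}\end{bmatrix}^\top F_Q\begin{bmatrix}I_{n_x}\\ p\otimes I_{n_x}\end{bmatrix}\quad\forall p\in\mathbb{P},$$ $Y_0\in\mathbb{R}^{n_u\times n_x}$, $\bar Y\in\mathbb{R}^{n_u\times n_xn_p}$ and $\Xi\in\mathbb{S}^{4n_pn_x}$ such that $$\begin{bmatrix}P&0&0\\0&I_{n_p}\otimes P&0\\ Y_0&\bar Y&0\\ 0& I_{n_p}\otimes Y_0& I_{n_p}\otimes\bar Y\end{bmatrix}=\mathcal{D}_p\mathcal{F},$$ and the full-block LMI conditions (defined in the context) hold with $\Delta(p)=\mathrm{diag}(p)\otimes I_{2n_x}$, $W=\begin{bmatrix}P_0&\mathcal{X}_+F_Q\\ (\mathcal{X}_+F_Q)^\top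 & P_0\end{bmatrix}$, $P_0=\mathrm{blkdiag}(P,0_{n_xn_p})$, $\mathcal{X}_+=\mathrm{blkdiag}(X_+,I_{n_p}\otimes X_+)$, $L_{11}=0_{2n_xn_p}$, $L_{12}=1_{n_p}\otimes I_{2n_x}$, $L_{21}=\begin{bmatrix}0_{n_x\times 2n_xn_p}\\ I_{n_p}\otimes[I_{n_x}\ 0]\\ 0_{n_x\times 2n_xn_p}\\ I_{n_p}\otimes[0\ I_{n_x}]\end{bmatrix}$, $L_{22}=\begin{bmatrix}[I_{n_x}\ 0]\\ 1_{n_p}\otimes 0_{n_x\times 2n_x}\\ [0\ I_{n_x}]\\ 1_{n_p}\otimes 0_{n_x\times 2n_x}\end{bmatrix}$. Then $K_0=Y_0P^{-1}$, $\bar K=\bar Y(I_{n_p}\otimes P)^{-1}$, with $\bar K=[K_1\ \cdots\ K_{n_p}]$, give an LPV state-feedback controller $K(p)=K_0+\sum_{i=1}^{n_p}p_iK_i$ that guarantees stability of the closed-loop interconnection $x_{k+1}=(A(p_k)+B(p_k)K(p_k))x_k$.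
   Context: Notation: $\otimes$ Kronecker product; $I_n$ identity; $0_{n\times m}$, $0_n$ zero matrices; $1_n\in\mathbb{R}^n$ the all-ones vector; $\mathbb{S}^n$ real symmetric $n\times n$ matrices; $\mathrm{blkdiag}$ block-diagonal concatenation; $\mathrm{diag}(p)$ diagonal matrix with the entries of $p$. The system has fully measured state $x_k\in\mathbb{R}^{n_x}$, input $u_k\in\mathbb{R}^{n_u}$, scheduling $p_k\in\mathbb{P}\subset\mathbb{R}^{n_p}$ with $\mathbb{P}$ compact and convex; $A_i,B_i$ unknown real matrices. $\mathcal{D}=\{u^d_k,p^d_k,x^d_k\}_{k=1}^{N_d}$ is a trajectory of the system; $U=[u^d_1\cdots u^d_{N_d-1}]$, $U^p=[p^d_1\otimes u^d_1\cdots p^d_{N_d-1}\otimes u^d_{N_d-1}]$, $X=[x^d_1\cdots x^d_{N_d-1}]$, $X^p=[p^d_1\otimes x^d_1\cdots p^d_{N_d-1}\otimes x^d_{N_d-1}]$, $X_+=[x^d_2\cdots x^d_{N_d}]$, $\mathcal{D}_p=[X^\top\ (X^p)^\top\ U^\top\ (U^p)^\top]^\top$. Stability of the closed loop means asymptotic stability for all scheduling trajectories with values in $\mathbb{P}$. Full-block LMI conditions for given $(\Delta(p),W,L_{11},L_{12},L_{21},L_{22})$ and symmetric multiplier $\Xi$: $\begin{bmatrix}L_{11}&L_{12}\\ I&0\end{bmatrix}^\top\Xi\begin{bmatrix}L_{11}&L_{12}\\ I&0\end{bmatrix}-\begin{bmatrix}L_{21}&L_{22}\end{bmatrix}^\top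 W\begin{bmatrix}L_{21}&L_{22}\end{bmatrix}\prec0$ and $\begin{bmatrix}I\\ \Delta(p)\end{bmatrix}^\top\Xi\begin{bmatrix}I\\ \Delta(p)\end{bmatrix}\succeq0$ for all $p\in\mathbb{P}$. *)

(* Defs.v *)
From HB Require Import structures.
From mathcomp Require Import all_boot all_order all_algebra.
From mathcomp Require Import all_classical all_reals all_analysis.
From mathcomp Require Import mxtens.
Set Implicit Arguments. Unset Strict Implicit. Unset Printing Implicit Defensive.
Import Order.TTheory GRing.Theory Num.Theory.
Import numFieldNormedType.Exports.
Local Open Scope ring_scope.
Local Open Scope classical_set_scope.

Section Defs.
Variable R : realType.

Definition kron_col m r c (p : 'cV[R]_m) (B : 'M[R]_(r, c)) : 'M[R]_(m * r, c) :=
  castmx (erefl (m * r), mul1n c) (p *t B).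

Definition kron_vec m n (p : 'cV[R]_m) (x : 'cV[R]_n) : 'cV[R]_(m * n) :=
  castmx (erefl (m * n), mul1n 1) (p *t x).

Definition diag_col m (p : 'cV[R]_m) : 'M[R]_m := diag_mx p^T.

Definition ones n : 'cV[R]_n := const_mx 1.

Definition sym_mx n (M : 'M[R]_n) : Prop := M^T = M.

Definition posdef n (M : 'M[R]_n) : Prop :=
  forall v : 'cV[R]_n, v != 0 -> 0 < (v^T *m M *m v) 0 0.
Definition negdef n (M : 'M[R]_n) : Prop :=
  forall v : 'cV[R]_n, v != 0 -> (v^T *m M *m v) 0 0 < 0.
Definition possemidef n (M : 'M[R]_n) : Prop :=
  forall v : 'cV[R]_n, 0 <= (v^T *m M *m v) 0 0.

Definition affine np r c (M0 : 'M[R]_(r, c)) (Mi : 'I_np -> 'M[R]_(r, c))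
  (p : 'cV[R]_np) : 'M[R]_(r, c) :=
  M0 + \sum_(i < np) p i 0 *: Mi i.

Definition blk_col r np n (M : 'M[R]_(r, np * n)) (i : 'I_np) : 'M[R]_(r, n) :=
  \matrix_(a, b) M a (mxtens_index (i, b)).

Fixpoint traj n np (Acl : 'cV[R]_np -> 'M[R]_n) (p : nat -> 'cV[R]_np)
  (x0 : 'cV[R]_n) (k : nat) : 'cV[R]_n :=
  match k with
  | O => x0
  | S k' => Acl (p k') *m traj Acl p x0 k'
  end.

Definition asympt_stable n np (Acl : 'cV[R]_np -> 'M[R]_n)
  (p : nat -> 'cV[R]_np) : Prop :=
  (forall eps : R, 0 < eps -> exists2 delta : R, 0 < delta &
     forall x0 : 'cV[R]_n, `|x0| < delta -> forall k, `|traj Acl p x0 k| < eps)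
  /\ (exists2 delta : R, 0 < delta &
     forall x0 : 'cV[R]_n, `|x0| < delta ->
       traj Acl p x0 @ \oo --> (0 : 'cV[R]_n)).

Definition lpv_stable n np (PP : set 'cV[R]_np) (Acl : 'cV[R]_np -> 'M[R]_n)
  : Prop :=
  forall p : nat -> 'cV[R]_np, (forall k, PP (p k)) -> asympt_stable Acl p.

End Defs.

(* Main.v *)
Require Import Defs.
From HB Require Import structures.
From mathcomp Require Import all_boot all_order all_algebra.
From mathcomp Require Import all_classical all_reals all_analysis.
From mathcomp Require Import mxtens.
From mathcomp Require Import ring lra.
Set Implicit Arguments. Unset Strict Implicit. Unset Printing Implicit Defensive.
Import Order.TTheory GRing.Theory Num.Theory.
Import numFieldNormedType.Exports.
Local Open Scope ring_scope.
Local Open Scope classical_set_scope.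

Lemma kron_vecE (R : realType) m n (q : 'cV[R]_m) (y : 'cV[R]_n) i j :
  kron_vec q y (mxtens_index (i, j)) 0 = q i 0 * y j 0.
Proof.
rewrite /kron_vec castmxE /=.
have -> : cast_ord (esym (mul1n 1)) 0 = mxtens_index (0 : 'I_1, 0 : 'I_1).
  by apply: val_inj.
by rewrite cast_ord_id tensmxE.
Qed.

Lemma kron_colE (R : realType) m r c (q : 'cV[R]_m) (B : 'M[R]_(r, c)) i j k :
  kron_col q B (mxtens_index (i, j)) k = q i 0 * B j k.
Proof.
rewrite /kron_col castmxE /=.
have -> : cast_ord (esym (mul1n c)) k = mxtens_index (0 : 'I_1, k).
  by apply: val_inj.
by rewrite cast_ord_id tensmxE.
Qed.

Lemma sum_tens (R : realType) m n (F : 'I_(m * n) -> R) :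
  \sum_(k < m * n) F k = \sum_(i < m) \sum_(j < n) F (mxtens_index (i, j)).
Proof.
rewrite pair_big /=; apply: reindex => /=.
exists (@mxtens_unindex m n) => k _.
  by case: k => a b; rewrite mxtens_indexK.
by rewrite -surjective_pairing mxtens_unindexK.
Qed.

Lemma tens_kron (R : realType) m n r s (A : 'M[R]_(m, n)) (C : 'M[R]_(r, s))
  (q : 'cV[R]_n) (y : 'cV[R]_s) :
  (A *t C) *m kron_vec q y = kron_vec (A *m q) (C *m y).
Proof.
apply/colP => k; case: (mxtens_indexP k) => i j.
rewrite kron_vecE !mxE sum_tens.
rewrite mulr_suml; apply: eq_bigr => a _; rewrite mulr_sumr; apply: eq_bigr => b _.
by rewrite kron_vecE tensmxE; rewrite -!mulrA; congr (_ * _); rewrite mulrCA.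
Qed.

Lemma kron_col_mul (R : realType) m r c (q : 'cV[R]_m) (B : 'M[R]_(r, c))
  (x : 'cV[R]_c) : kron_col q B *m x = kron_vec q (B *m x).
Proof.
apply/colP => k; case: (mxtens_indexP k) => i j.
rewrite kron_vecE !mxE mulr_sumr; apply: eq_bigr => a _.
by rewrite kron_colE mulrA.
Qed.

Lemma kron_vecD (R : realType) m n (q : 'cV[R]_m) (y z : 'cV[R]_n) :
  kron_vec q (y + z) = kron_vec q y + kron_vec q z.
Proof.
apply/colP => k; case: (mxtens_indexP k) => i j.
by rewrite mxE !kron_vecE mxE mulrDr.
Qed.

Lemma kron_vec0 (R : realType) m n (q : 'cV[R]_m) :
  kron_vec q (0 : 'cV[R]_n) = 0.
Proof.
apply/colP => k; case: (mxtens_indexP k) => i j.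
by rewrite kron_vecE !mxE mulr0.
Qed.

Lemma kron_vecN (R : realType) m n (q : 'cV[R]_m) (y : 'cV[R]_n) :
  kron_vec q (- y) = - kron_vec q y.
Proof.
apply/colP => k; case: (mxtens_indexP k) => i j.
by rewrite mxE !kron_vecE mxE mulrN.
Qed.

Lemma blk_col_kron (R : realType) r np n (M : 'M[R]_(r, np * n))
  (q : 'cV[R]_np) (x : 'cV[R]_n) :
  M *m kron_vec q x = \sum_(i < np) q i 0 *: (blk_col M i *m x).
Proof.
apply/colP => a; rewrite !mxE sum_tens summxE; apply: eq_bigr => i _.
rewrite !mxE mulr_sumr; apply: eq_bigr => j _.
by rewrite kron_vecE !mxE mulrCA.
Qed.

Lemma blk_col_tens (R : realType) r np n (M : 'M[R]_(r, np * n))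
  (P : 'M[R]_n) i :
  blk_col (M *m ((1%:M : 'M[R]_np) *t P)) i = blk_col M i *m P.
Proof.
apply/matrixP => a b; rewrite !mxE sum_tens.
rewrite (bigD1 i) //= [X in _ + X]big1 ?addr0.
  by apply: eq_bigr => j _; rewrite tensmxE !mxE eqxx mulr1n mul1r.
move=> k /negbTE ki; rewrite big1 // => j _.
by rewrite tensmxE mxE ki mulr0n mul0r mulr0.
Qed.
Lemma tens11 (R : realType) m n :
  (1%:M : 'M[R]_m) *t (1%:M : 'M[R]_n) = 1%:M.
Proof.
apply/matrixP => a b; case: (mxtens_indexP a) => i j; case: (mxtens_indexP b) => k l.
rewrite tensmxE !mxE (inj_eq (can_inj (@mxtens_indexK m n))) xpair_eqE.
by case: (i == k); case: (j == l); rewrite ?mulr1 ?mulr0.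
Qed.

Lemma diag_ones (R : realType) m (p : 'cV[R]_m) : diag_col p *m ones R m = p.
Proof.
apply/colP => i; rewrite !mxE (bigD1 i) //= big1 ?addr0.
  by rewrite !mxE eqxx mulr1n mulr1.
by move=> j /negbTE ji; rewrite !mxE eq_sym ji mulr0n mul0r.
Qed.

Definition bf (R : realType) m n (x : 'cV[R]_m) (M : 'M[R]_(m, n)) (y : 'cV[R]_n) : R :=
  (x^T *m M *m y) 0 0.

Lemma bf_sym (R : realType) n (x y : 'cV[R]_n) (M : 'M[R]_n) :
  M^T = M -> bf x M y = bf y M x.
Proof.
move=> sM; rewrite /bf.
have -> : (x^T *m M *m y) 0 0 = ((x^T *m M *m y)^T) 0 0 by rewrite [RHS]mxE.
by rewrite !trmx_mul trmxK sM mulmxA.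
Qed.

Lemma bf_expand (R : realType) n (v u : 'cV[R]_n) (M : 'M[R]_n) (t : R) :
  M^T = M ->
  bf (v + t *: u) M (v + t *: u) = bf v M v + 2 * t * bf u M v + t ^+ 2 * bf u M u.
Proof.
move=> sM; rewrite /bf !linearD !linearZ /= !mulmxDl.
rewrite -!scalemxAl.
have -> : v^T *m M *m u = u^T *m M *m v.
  by apply/matrixP => i j; rewrite !ord1; have := bf_sym v u sM; rewrite /bf.
rewrite !mxE; ring.
Qed.

Lemma cs_pd (R : realType) n (M : 'M[R]_n) (u v : 'cV[R]_n) :
  M^T = M -> (forall w, 0 <= bf w M w) -> 0 < bf u M u ->
  bf u M v ^+ 2 <= bf u M u * bf v M v.
Proof.
move=> sM psd Cpos.
set C := bf u M u; set B := bf u M v.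
pose t := - B / C.
have h := psd (v + t *: u); rewrite bf_expand // -/C -/B in h.
have e : t * C = - B by rewrite /t mulrAC -mulrA divff ?mulr1 // gt_eqF.
have h2 : 0 <= C * (bf v M v + 2 * t * B + t ^+ 2 * C) by apply: mulr_ge0 => //; apply: ltW.
have E : C * (bf v M v + 2 * t * B + t ^+ 2 * C) = C * bf v M v + 2 * (t * C) * B + (t * C) ^+ 2 by ring.
rewrite E e in h2; nra.
Qed.

Lemma posdef_unit (R : realType) n (M : 'M[R]_n) : posdef M -> M \in unitmx.
Proof.
move=> pd; case: (boolP (M \in unitmx)) => // nu.
have /det0P [v v0 vM] : \det M == 0.
  by move: nu; rewrite unitmxE unitfE negbK.
have : v^T != 0 by rewrite trmx_eq0.
move=> /pd; rewrite trmxK vM mul0mx mxE ltxx.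
by [].
Qed.

Lemma posdef_bound (R : realType) n (M : 'M[R]_n) :
  M^T = M -> posdef M ->
  exists c : R, 0 <= c /\ forall (v : 'cV[R]_n) i, (v i 0) ^+ 2 <= c * bf v M v.
Proof.
move=> sM pd.
have psd : forall w, 0 <= bf w M w.
  move=> w; case: (eqVneq w 0) => [->|w0]; last by apply/ltW/pd.
  by rewrite /bf mulmx0 mxE.
have uM := posdef_unit pd.
pose u (i : 'I_n) : 'cV[R]_n := (invmx M)^T *m delta_mx i 0.
have buv : forall i v, bf (u i) M v = v i 0.
  move=> i v; rewrite /bf /u trmx_mul trmxK -!mulmxA (mulmxA (invmx M)) mulVmx //.
  by rewrite mul1mx trmx_delta -rowE mxE.
exists (\sum_i bf (u i) M (u i)); split; first by apply: sumr_ge0 => i _.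
move=> v i; rewrite -buv.
have hle : bf (u i) M (u i) <= \sum_i bf (u i) M (u i).
  rewrite (bigD1 i) //= lerDl; exact: sumr_ge0.
case: (eqVneq (u i) 0) => [->|ui0].
  rewrite /bf trmx0 mul0mx mul0mx mxE expr0n /=.
  by apply: mulr_ge0; [apply: sumr_ge0 => j _; exact: psd | exact: psd].
have hc : 0 < bf (u i) M (u i) by exact: pd.
have := cs_pd v sM psd hc => h.
apply: le_trans h _.
by apply: ler_wpM2r.
Qed.

Lemma bf_upper (R : realType) n (M : 'M[R]_n) (v : 'cV[R]_n) (K : R) :
  (forall i, (v i 0) ^+ 2 <= K) ->
  bf v M v <= (\sum_i \sum_j `|M i j|) * K.
Proof.
move=> hK; rewrite /bf mxE mulr_suml.
under eq_bigr => j _ do rewrite mxE mulr_suml.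
rewrite exchange_big /=; apply: ler_sum => i _; rewrite mulr_suml.
apply: ler_sum => j _; rewrite !mxE.
have hi := hK i; have hj := hK j.
set a := v i 0 in hi *; set b := v j 0 in hj *; set m := M i j.

case: (lerP 0 m) => hm; [rewrite ger0_norm // | rewrite ltr0_norm //].
  have h1 := mulr_ge0 hm (sqr_ge0 (a - b)).
  have h2 : 0 <= m * (K - a ^+ 2) by apply: mulr_ge0; lra.
  have h3 : 0 <= m * (K - b ^+ 2) by apply: mulr_ge0; lra.
  nra.
have hm' : 0 <= - m by lra.
have h1 := mulr_ge0 hm' (sqr_ge0 (a + b)).
have h2 : 0 <= - m * (K - a ^+ 2) by apply: mulr_ge0; lra.
have h3 : 0 <= - m * (K - b ^+ 2) by apply: mulr_ge0; lra.
nra.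
Qed.

Lemma norm_entry (R : realType) m n (v : 'M[R]_(m, n)) i j : `|v i j| <= `|v|.
Proof.
rewrite [leRHS]/Num.Def.normr /= mx_normrE.
by apply/bigmax_geP; right => /=; exists (i, j).
Qed.

Lemma norm_lt (R : realType) m n (v : 'M[R]_(m, n)) e :
  0 < e -> (forall i j, `|v i j| < e) -> `|v| < e.
Proof.
move=> e0 h; rewrite /Num.Def.normr /= mx_normrE.
by apply: bigmax_lt => // -[i j] _; apply: h.
Qed.

Lemma bf_tr (R : realType) m n (x : 'cV[R]_n) (M : 'M[R]_(m, n)) (y : 'cV[R]_m) :
  bf x M^T y = bf y M x.
Proof.
rewrite /bf.
have -> : (x^T *m M^T *m y) 0 0 = ((x^T *m M^T *m y)^T) 0 0 by rewrite [RHS]mxE.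
by rewrite !trmx_mul !trmxK mulmxA.
Qed.

Lemma bf_conj (R : realType) m n (A : 'M[R]_(m, n)) (X : 'M[R]_m) (z : 'cV[R]_n) :
  bf z (A^T *m X *m A) z = bf (A *m z) X (A *m z).
Proof. by rewrite /bf trmx_mul !mulmxA. Qed.

Lemma bf_sub (R : realType) m n (x : 'cV[R]_m) (A B : 'M[R]_(m, n)) y :
  bf x (A - B) y = bf x A y - bf x B y.
Proof. by rewrite /bf mulmxBr mulmxBl !mxE. Qed.

Lemma bf_opp (R : realType) m n (x : 'cV[R]_m) (A : 'M[R]_(m, n)) y :
  bf x (- A) y = - bf x A y.
Proof. by rewrite /bf mulmxN mulNmx !mxE. Qed.

Lemma bf_block (R : realType) m1 m2 n1 n2 (x1 : 'cV[R]_m1) (x2 : 'cV[R]_m2)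
  (y1 : 'cV[R]_n1) (y2 : 'cV[R]_n2) A B C D :
  bf (col_mx x1 x2) (block_mx A B C D) (col_mx y1 y2) =
  bf x1 A y1 + bf x1 B y2 + bf x2 C y1 + bf x2 D y2.
Proof.
rewrite /bf tr_col_mx mul_row_block mul_row_col !mulmxDl !mxE.
ring.
Qed.

Lemma bf0 (R : realType) m n (x : 'cV[R]_m) (y : 'cV[R]_n) : bf x 0 y = 0.
Proof. by rewrite /bf mulmx0 mul0mx mxE. Qed.

Lemma bfN (R : realType) m n (x : 'cV[R]_m) (M : 'M[R]_(m, n)) (y : 'cV[R]_n) :
  bf (- x) M (- y) = bf x M y.
Proof.
rewrite /bf; have -> : (- x)^T = - x^T by apply/matrixP => i j; rewrite !mxE.
by rewrite mulNmx mulNmx mulmxN opprK.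
Qed.

Lemma affine_mul (R : realType) np r c (M0 : 'M[R]_(r, c)) (Mi : 'I_np -> 'M[R]_(r, c))
  (p : 'cV[R]_np) (x : 'cV[R]_c) :
  affine M0 Mi p *m x = M0 *m x + \sum_(i < np) p i 0 *: (Mi i *m x).
Proof.
rewrite /affine mulmxDl mulmx_suml; congr (_ + _).
by apply: eq_bigr => i _; rewrite scalemxAl.
Qed.

Lemma mul_col_entry (R : realType) m n k (M : 'M[R]_(m, n)) (C : 'M[R]_(n, k)) r j :
  (M *m C) r j = (M *m col j C) r 0.
Proof. by rewrite !mxE; apply: eq_bigr => l _; rewrite !mxE. Qed.

Lemma addmx_entry (R : realType) m n (A B : 'M[R]_(m, n)) i j :
  (A + B) i j = A i j + B i j.
Proof. by rewrite mxE. Qed.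

Lemma posdef_psd (R : realType) n (M : 'M[R]_n) : posdef M -> forall w, 0 <= bf w M w.
Proof.
move=> pd w; case: (eqVneq w 0) => [->|w0]; last by apply/ltW/pd.
by rewrite /bf mulmx0 mxE.
Qed.

Lemma sq_le_norm (R : realType) m n (v : 'M[R]_(m, n)) i j : (v i j) ^+ 2 <= `|v| ^+ 2.
Proof.
rewrite -(real_normK (num_real (v i j))).
have h := norm_entry v i j; have h0 := normr_ge0 (v i j); nra.
Qed.

Lemma sq_lt_abs (R : realType) (t e : R) : 0 < e -> t ^+ 2 < e ^+ 2 -> `|t| < e.
Proof.
rewrite -(real_normK (num_real t)) => e0 h; have := normr_ge0 t; nra.
Qed.


Unset Implicit Arguments.

Theorem theorem3 (R : realType) (nx nu np N : nat)
  (PP : set 'cV[R]_np) (PP_compact : compact PP) (PP_convex : convex_set PP)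
  (A0 : 'M[R]_nx) (Ai : 'I_np -> 'M[R]_nx)
  (B0 : 'M[R]_(nx, nu)) (Bi : 'I_np -> 'M[R]_(nx, nu))
  (xd : nat -> 'cV[R]_nx) (ud : nat -> 'cV[R]_nu) (pd : nat -> 'cV[R]_np)
  (Hdata : forall k, (k < N)%N ->
     PP (pd k) /\
     xd k.+1 = affine A0 Ai (pd k) *m xd k + affine B0 Bi (pd k) *m ud k)
  (P : 'M[R]_nx)
  (FF : 'M[R]_(N, nx + np * nx + np * (np * nx)))
  (FQ : 'M[R]_(N + np * N, nx + np * nx))
  (Y0 : 'M[R]_(nu, nx)) (Ybar : 'M[R]_(nu, np * nx))
  (Xi : 'M[R]_(np * (nx + nx) + np * (nx + nx))) :
  let U : 'M[R]_(nu, N) := \matrix_(i, j) ud j i 0 in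
  let Up : 'M[R]_(np * nu, N) := \matrix_(i, j) kron_vec (pd j) (ud j) i 0 in
  let X : 'M[R]_(nx, N) := \matrix_(i, j) xd j i 0 in
  let Xp : 'M[R]_(np * nx, N) := \matrix_(i, j) kron_vec (pd j) (xd j) i 0 in
  let Xplus : 'M[R]_(nx, N) := \matrix_(i, j) xd j.+1 i 0 in
  let Dp := col_mx (col_mx X Xp) (col_mx U Up) in
  let P0 : 'M[R]_(nx + np * nx) := block_mx P 0 0 0 in
  let XXplus : 'M[R]_(nx + np * nx, N + np * N) :=
    block_mx Xplus 0 0 ((1%:M : 'M[R]_np) *t Xplus) in
  let W := block_mx P0 (XXplus *m FQ) (XXplus *m FQ)^T P0 in
  let Delta (p : 'cV[R]_np) : 'M[R]_(np * (nx + nx)) :=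
    diag_col p *t (1%:M : 'M[R]_(nx + nx)) in
  let L11 : 'M[R]_(np * (nx + nx)) := 0 in
  let L12 : 'M[R]_(np * (nx + nx), nx + nx) := kron_col (ones R np) 1%:M in
  let IxO : 'M[R]_(nx, nx + nx) := row_mx 1%:M 0 in
  let OxI : 'M[R]_(nx, nx + nx) := row_mx 0 1%:M in
  let L21 : 'M[R]_((nx + np * nx) + (nx + np * nx), np * (nx + nx)) :=
    col_mx (col_mx 0 ((1%:M : 'M[R]_np) *t IxO))
           (col_mx 0 ((1%:M : 'M[R]_np) *t OxI)) in
  let L22 : 'M[R]_((nx + np * nx) + (nx + np * nx), nx + nx) :=
    col_mx (col_mx IxO (kron_col (ones R np) (0 : 'M[R]_(nx, nx + nx))))
           (col_mx OxI (kron_col (ones R np) (0 : 'M[R]_(nx, nx + nx)))) in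
  let M1 := col_mx (row_mx L11 L12) (row_mx 1%:M 0) in
  let M2 := row_mx L21 L22 in
  let K0 := Y0 *m invmx P in
  let Kbar := Ybar *m invmx ((1%:M : 'M[R]_np) *t P) in
  let K (p : 'cV[R]_np) : 'M[R]_(nu, nx) :=
    affine K0 (blk_col Kbar) p in
  row_free Dp ->
  sym_mx P -> posdef P ->
  (forall p, PP p ->
     FF *m col_mx (col_mx 1%:M (kron_col p 1%:M))
                  (kron_col p (kron_col p (1%:M : 'M[R]_nx)))
     = (col_mx 1%:M (kron_col p (1%:M : 'M[R]_N)))^T *m FQ
         *m col_mx 1%:M (kron_col p 1%:M)) ->
  col_mx (col_mx
     (row_mx (row_mx P 0) 0)
     (row_mx (row_mx 0 ((1%:M : 'M[R]_np) *t P)) 0))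
   (col_mx
     (row_mx (row_mx Y0 Ybar) 0)
     (row_mx (row_mx 0 ((1%:M : 'M[R]_np) *t Y0))
             ((1%:M : 'M[R]_np) *t Ybar)))
   = Dp *m FF ->
  sym_mx Xi ->
  negdef (M1^T *m Xi *m M1 - M2^T *m W *m M2) ->
  (forall p, PP p ->
     possemidef ((col_mx 1%:M (Delta p))^T *m Xi *m col_mx 1%:M (Delta p))) ->
  lpv_stable PP
    (fun p => affine A0 Ai p + affine B0 Bi p *m K p).
Proof.
Proof.
move=> U Up X Xp Xplus Dp P0 XXplus W Delta L11 L12 IxO OxI L21 L22 M1 M2 K0 Kbar K
  _ sP pdP hFF hBig sXi ndS psdXi.
have uP := posdef_unit pdP.
have uT : ((1%:M : 'M[R]_np) *t P) \in unitmx.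
  have h : ((1%:M : 'M[R]_np) *t invmx P) *m ((1%:M : 'M[R]_np) *t P) = 1%:M.
    by rewrite tensmx_mul mul1mx mulVmx // tens11.
  by case/mulmx1_unit: h.
pose Abar : 'M[R]_(nx, np * nx) :=
  \matrix_(r, k) Ai (mxtens_unindex k).1 r (mxtens_unindex k).2.
pose Bbar : 'M[R]_(nx, np * nu) :=
  \matrix_(r, k) Bi (mxtens_unindex k).1 r (mxtens_unindex k).2.
have affA : forall p x, affine A0 Ai p *m x = A0 *m x + Abar *m kron_vec p x.
  move=> p x; rewrite affine_mul blk_col_kron; congr (_ + _).
  apply: eq_bigr => i _; congr (_ *: (_ *m _)).
  by apply/matrixP => r j; rewrite !mxE mxtens_indexK.
have affB : forall p x, affine B0 Bi p *m x = B0 *m x + Bbar *m kron_vec p x.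
  move=> p x; rewrite affine_mul blk_col_kron; congr (_ + _).
  apply: eq_bigr => i _; congr (_ *: (_ *m _)).
  by apply/matrixP => r j; rewrite !mxE mxtens_indexK.
have hX : Xplus = A0 *m X + Abar *m Xp + (B0 *m U + Bbar *m Up).
  apply/matrixP => r j.
  rewrite !addmx_entry !(mul_col_entry _ _ r j).
  have cX : col j X = xd j by apply/colP => i; rewrite !mxE.
  have cXp : col j Xp = kron_vec (pd j) (xd j) by apply/colP => i; rewrite !mxE.
  have cU : col j U = ud j by apply/colP => i; rewrite !mxE.
  have cUp : col j Up = kron_vec (pd j) (ud j) by apply/colP => i; rewrite !mxE.
  rewrite cX cXp cU cUp -!addmx_entry -affA -affB.
  have [_ hd] := Hdata j (ltn_ord j).
  by rewrite -hd /Xplus mxE.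
have hD : Dp *m FF = col_mx (col_mx (X *m FF) (Xp *m FF)) (col_mx (U *m FF) (Up *m FF)).
  by rewrite /Dp !mul_col_mx.
rewrite hD in hBig.
case/eq_col_mx: hBig => /eq_col_mx [h1 h2] /eq_col_mx [h3 h4].
have hy : forall p (b : 'cV[R]_nx), Y0 *m b + Ybar *m kron_vec p b = K p *m (P *m b).
  move=> p b; rewrite /K affine_mul /K0 blk_col_kron.
  rewrite -!mulmxA (mulmxA (invmx P)) mulVmx // mul1mx; congr (_ + _).
  apply: eq_bigr => i _; congr (_ *: _).
  by rewrite mulmxA -blk_col_tens /Kbar -mulmxA mulVmx // mulmx1.
have hkey : forall p (b : 'cV[R]_nx),
  Xplus *m (FF *m col_mx (col_mx b (kron_vec p b)) (kron_vec p (kron_vec p b)))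
  = (affine A0 Ai p + affine B0 Bi p *m K p) *m (P *m b).
  move=> p b; rewrite [RHS]mulmxDl -[in RHS]mulmxA -hy affA affB.
  rewrite hX !mulmxDl -!mulmxA !(mulmxA X) !(mulmxA Xp) !(mulmxA U) !(mulmxA Up).
  rewrite -h1 -h2 -h3 -h4.
  rewrite !mul_row_col !mul0mx !addr0 !add0r !tens_kron !mul1mx -kron_vecD.
  by [].
pose Acl p := affine A0 Ai p + affine B0 Bi p *m K p.
have hM2 : forall p (a b : 'cV[R]_nx),
  M2 *m col_mx (Delta p *m (L12 *m col_mx a b)) (col_mx a b) =
  col_mx (col_mx a (kron_vec p a)) (col_mx b (kron_vec p b)).
  move=> p a b.
  have hL12 : L12 *m col_mx a b = kron_vec (ones R np) (col_mx a b).
    by rewrite /L12 kron_col_mul mul1mx.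
  rewrite hL12 /Delta tens_kron diag_ones mul1mx.
  rewrite /M2 mul_row_col /L21 /L22 !mul_col_mx !mul0mx !tens_kron !mul1mx.
  rewrite !kron_col_mul !mul0mx !kron_vec0.
  have hI : IxO *m col_mx a b = a by rewrite /IxO mul_row_col mul1mx mul0mx addr0.
  have hO : OxI *m col_mx a b = b by rewrite /OxI mul_row_col mul1mx mul0mx add0r.
  by rewrite hI hO !add_col_mx !add0r !addr0.
have hM1 : forall (w : 'cV[R]_(np * (nx + nx))) (v : 'cV[R]_(nx + nx)),
  M1 *m col_mx w v = col_mx (L12 *m v) w.
  move=> w v.
  by rewrite /M1 mul_col_mx !mul_row_col /L11 !mul0mx add0r mul1mx addr0.
have hW : forall p, PP p -> forall a b : 'cV[R]_nx,
  bf (col_mx (col_mx a (kron_vec p a)) (col_mx b (kron_vec p b))) W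
     (col_mx (col_mx a (kron_vec p a)) (col_mx b (kron_vec p b)))
  = bf a P a + 2 * bf a (Acl p *m P) b + bf b P b.
  move=> p Hp a b.
  rewrite /W bf_block bf_tr.
  have hP0 : forall g : 'cV[R]_nx,
      bf (col_mx g (kron_vec p g)) P0 (col_mx g (kron_vec p g)) = bf g P g.
    by move=> g; rewrite /P0 bf_block !bf0 !addr0.
  rewrite !hP0.
  have hZ : bf (col_mx a (kron_vec p a)) (XXplus *m FQ) (col_mx b (kron_vec p b))
          = bf a (Acl p *m P) b.
    have e1 : (col_mx a (kron_vec p a))^T *m XXplus =
        (Xplus^T *m a)^T *m (col_mx 1%:M (kron_col p (1%:M : 'M[R]_N)))^T.
      have e1' : XXplus^T *m col_mx a (kron_vec p a) =
          col_mx 1%:M (kron_col p (1%:M : 'M[R]_N)) *m (Xplus^T *m a).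
        rewrite /XXplus tr_block_mx !trmx0 trmx_tens trmx1.
        rewrite mul_block_col !mul0mx !addr0 !add0r tens_kron mul1mx.
        by rewrite mul_col_mx mul1mx kron_col_mul mul1mx.
      by rewrite -trmx_mul -e1' trmx_mul trmxK.
    have e2 : col_mx b (kron_vec p b) = col_mx 1%:M (kron_col p 1%:M) *m b.
      by rewrite mul_col_mx mul1mx kron_col_mul mul1mx.
    rewrite /bf.
    have e3 : (col_mx a (kron_vec p a))^T *m (XXplus *m FQ) *m col_mx b (kron_vec p b)
      = a^T *m Xplus *m ((col_mx 1%:M (kron_col p (1%:M : 'M[R]_N)))^T *m FQ
            *m col_mx 1%:M (kron_col p 1%:M)) *m b.
      by rewrite mulmxA e1 {1}e2 trmx_mul trmxK !mulmxA.
    rewrite e3 -hFF // -!mulmxA !mul_col_mx !mul1mx !kron_col_mul !mul1mx hkey.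
    by rewrite !mulmxA.
  rewrite hZ; ring.
have sP' : P^T = P := sP.
have sXi' : Xi^T = Xi := sXi.
pose S := M1^T *m Xi *m M1 - M2^T *m W *m M2.
have sW : W^T = W.
  rewrite /W tr_block_mx trmxK.
  have -> : P0^T = P0 by rewrite /P0 tr_block_mx !trmx0 sP'.
  by [].
have sS : (- S)^T = - S.
  have e : (- S)^T = - ((M1^T *m Xi *m M1)^T - (M2^T *m W *m M2)^T).
    by apply/matrixP => i j; rewrite !mxE.
  by rewrite e !trmx_mul !trmxK sXi' sW !mulmxA.
have pdS : posdef (- S).
  move=> v v0; rewrite mulmxN mulNmx mxE oppr_gt0; exact: ndS.
have [cS [cS0 hcS]] := posdef_bound sS pdS.
pose Q := (invmx P)^T *m P *m invmx P.
have sQ : Q^T = Q by rewrite /Q !trmx_mul trmxK sP' !mulmxA.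
have pdQ : posdef Q.
  move=> w w0; rewrite -/(bf w Q w) /Q bf_conj; apply: pdP.
  apply: contra w0 => /eqP h; apply/eqP.
  by rewrite -(mul1mx w) -(mulmxV uP) -mulmxA h mulmx0.
have [cQ [cQ0 hcQ]] := posdef_bound sQ pdQ.
pose V (x : 'cV[R]_nx) := bf x Q x.
have V0 : forall x, 0 <= V x by move=> x; apply: posdef_psd.
pose sPv := \sum_i \sum_j `|P i j|.
have sPv0 : 0 <= sPv by apply: sumr_ge0 => i _; apply: sumr_ge0 => j _.
pose kap := 1 + sPv * cS.
have kap1 : 1 <= kap by rewrite /kap lerDl; apply: mulr_ge0.
have kap0 : 0 < kap by apply: lt_le_trans kap1.
pose rho := 1 - kap^-1.
have hdec : forall p, PP p -> forall x, V (Acl p *m x) <= rho * V x.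
  move=> p Hp x.
  set b := invmx P *m x; set y := Acl p *m x; set a := - (invmx P *m y).
  set v := col_mx a b.
  set z := L12 *m v.
  set u := col_mx (Delta p *m z) v.
  have hVx : V x = bf b P b by rewrite /V /Q bf_conj.
  have hVy : V y = bf (invmx P *m y) P (invmx P *m y) by rewrite /V /Q bf_conj.
  have hu : bf u (- S) u = bf a P a + 2 * bf a (Acl p *m P) b + bf b P b
            - bf z ((col_mx 1%:M (Delta p))^T *m Xi *m col_mx 1%:M (Delta p)) z.
    rewrite bf_opp /S bf_sub !bf_conj hM2 hW // hM1.
    have -> : col_mx z (Delta p *m z) = col_mx 1%:M (Delta p) *m z.
      by rewrite mul_col_mx mul1mx.
    ring.
  have hpsd : 0 <= bf z ((col_mx 1%:M (Delta p))^T *m Xi *m col_mx 1%:M (Delta p)) z.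
    exact: psdXi.
  have hQ : bf a P a + 2 * bf a (Acl p *m P) b + bf b P b = V x - V y.
    have e1 : bf a P a = V y by rewrite hVy /a bfN.
    have e2 : bf a (Acl p *m P) b = - V y.
      have e : Acl p *m P *m b = y by rewrite /b -mulmxA (mulmxA P) mulmxV // mul1mx.
      rewrite hVy /bf -mulmxA e.

      rewrite -(mulmxA _ P) (mulmxA P) mulmxV // mul1mx.
      have -> : a^T = - (invmx P *m y)^T by rewrite /a; apply/matrixP => i j; rewrite !mxE.
      by rewrite mulNmx mxE.
    rewrite e1 e2 hVx; ring.
  have hSu := posdef_psd pdS u.
  have hdiff : 0 <= V x - V y by lra.
  have hb : forall j, (b j 0) ^+ 2 <= cS * (V x - V y).
    move=> j; have := hcS u (rshift _ (rshift _ j)).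
    rewrite /u col_mxEd /v col_mxEd => h; apply: le_trans h _.
    by apply: ler_wpM2l => //; lra.
  have hVb := bf_upper P hb.
  rewrite -hVx -/sPv in hVb.
  have hk2 : V x <= kap * (V x - V y).
    apply: le_trans hVb _; rewrite /kap mulrA mulrDl mul1r lerDr.
    exact: hdiff.
  rewrite /rho mulrBl mul1r.
  have -> : kap^-1 * V x = V x / kap by rewrite mulrC.
  suff : V y * kap <= V x * kap - V x.
    move=> hh; rewrite lerBrDr -lerBrDl ler_pdivrMr //; lra.
  lra.
have rho0 : 0 <= rho.
  rewrite /rho subr_ge0 invf_le1 //.
have rho1 : rho < 1 by rewrite /rho ltrBlDr ltrDl invr_gt0.
pose sQv := \sum_i \sum_j `|Q i j|.
have sQv0 : 0 <= sQv by apply: sumr_ge0 => i _; apply: sumr_ge0 => j _.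
pose C := cQ * sQv.
have C0 : 0 <= C by apply: mulr_ge0.
have hVup : forall x : 'cV[R]_nx, V x <= sQv * `|x| ^+ 2.
  by move=> x; apply: bf_upper => i; apply: sq_le_norm.
move=> p Hp.
pose T := traj (fun p => affine A0 Ai p + affine B0 Bi p *m K p) p.
have hT : forall x0 k, V (T x0 k) <= rho ^+ k * V x0.
  move=> x0; elim => [|k IH]; first by rewrite expr0 mul1r.
  rewrite /T /= -/(T x0 k).
  apply: le_trans (hdec _ (Hp k) _) _.
  by rewrite exprS -mulrA; apply: ler_wpM2l.
have hent : forall x0 k i, (T x0 k i 0) ^+ 2 <= C * rho ^+ k * `|x0| ^+ 2.
  move=> x0 k i; apply: le_trans (hcQ _ i) _.
  have hh1 := hT x0 k; have hh2 := hVup x0.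
  have hr : 0 <= rho ^+ k by apply: exprn_ge0.
  rewrite /C -!mulrA; apply: ler_wpM2l => //.
  apply: le_trans hh1 _.
  by rewrite [X in _ <= X]mulrCA; apply: ler_wpM2l.
split.
  move=> eps eps0; exists (eps / (1 + C)).
    by apply: divr_gt0 => //; lra.
  move=> x0 hx0 k; apply: norm_lt => // i j; rewrite [j]ord1.
  apply: sq_lt_abs => //.
  have hk := hent x0 k i.
  have hrk : rho ^+ k <= 1 by apply: exprn_ile1 => //; apply: ltW.
  have C1 : 0 < 1 + C by lra.
  have hd : eps / (1 + C) * (1 + C) = eps by rewrite divfK // gt_eqF.
  apply: le_lt_trans hk _.
  set d := eps / (1 + C) in hx0 hd *.
  have d0 : 0 < d by rewrite /d divr_gt0.
  have n0 := normr_ge0 x0.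
  have hCn := mulr_ge0 C0 (sqr_ge0 `|x0|).
  have e1 : C * rho ^+ k * `|x0| ^+ 2 <= C * `|x0| ^+ 2.
    have hr1 : 0 <= 1 - rho ^+ k by lra.
    have := mulr_ge0 hCn hr1; nra.
  have e2 : `|x0| ^+ 2 <= d ^+ 2 by nra.
  have e3 : C * `|x0| ^+ 2 <= C * d ^+ 2 by apply: ler_wpM2l.
  have e4 : C * d ^+ 2 < eps ^+ 2.
    rewrite -hd; have := sqr_ge0 d; nra.
  lra.
exists 1 => // x0 _.
apply/cvgr0Pnorm_lt => e e0.
pose t := e ^+ 2 / (1 + C * `|x0| ^+ 2).
have t0 : 0 < t.
  apply: divr_gt0; first exact: exprn_gt0.
  have := mulr_ge0 C0 (sqr_ge0 `|x0|); lra.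
have hr : `|rho| < 1 by rewrite ger0_norm.
have := cvg_expr hr; move/cvgr0Pnorm_lt => /(_ t t0).
apply: filterS => k hk.
apply: norm_lt => // i j; rewrite [j]ord1.
apply: sq_lt_abs => //.
have hk' : rho ^+ k < t by move: hk; rewrite ger0_norm // exprn_ge0.
apply: le_lt_trans (hent x0 k i) _.
have hCn := mulr_ge0 C0 (sqr_ge0 `|x0|).
have hpos : 0 < 1 + C * `|x0| ^+ 2 by lra.
have ht : t * (1 + C * `|x0| ^+ 2) = e ^+ 2 by rewrite /t divfK // gt_eqF.
have e1 : C * rho ^+ k * `|x0| ^+ 2 <= C * `|x0| ^+ 2 * t.
  have hr2 : 0 <= t - rho ^+ k by lra.
  have := mulr_ge0 hCn hr2; nra.
have e2 : C * `|x0| ^+ 2 * t < e ^+ 2 by rewrite -ht; nra.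
lra.
Qed.
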